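(* The square root of $2$ is irrational in the Zykov field: there is no element $x$ of the Zykov field with $x\cdot x=K_2$ (where $K_2=K_1+K_1$ plays the role of $2$).
   Context: Graphs are finite simple graphs up to isomorphism. The Zykov join of $G=(V,E)$, $H=(W,F)$ is $G+H=(V\cup W,\,E\cup F\cup\{\{v,w\}:v\in V,w\in W\})$, and the Zykov product $G\cdot H$ has vertex set $V\times W$ with $(a,b)\sim(c,d)$ iff $\{a,c\}\in E$ or $\{b,d\}\in F$. The Zykov ring is the Grothendieck group of (graphs, $+$) with $\cdot$ extended bilinearly; it is an integral domain, and the Zykov field is its field of fractions. *)

(* Defs.v *)
From mathcomp Require Import all_boot.
Unset Implicit Arguments. Unset Strict Implicit. Unset Printing Implicit Defensive.

Record graph := Graph {
  gV : finType;
  gadj : rel gV;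
  gadj_sym : symmetric gadj;
  gadj_irr : irreflexive gadj }.
Arguments gadj {g}.
Arguments Graph {gV gadj}.

Definition giso (G H : graph) : Prop :=
  exists f : gV G -> gV H, bijective f /\
    forall x y, gadj (f x) (f y) = gadj x y.

Definition empty_adj : rel void := fun _ _ => false.
Lemma empty_sym : symmetric empty_adj. Proof. by []. Qed.
Lemma empty_irr : irreflexive empty_adj. Proof. by []. Qed.
Definition gempty : graph := Graph empty_sym empty_irr.

Definition K1_adj : rel unit := fun _ _ => false.
Lemma K1_sym : symmetric K1_adj. Proof. by []. Qed.
Lemma K1_irr : irreflexive K1_adj. Proof. by []. Qed.
Definition K1 : graph := Graph K1_sym K1_irr.

Definition join_adj (G H : graph) : rel (gV G + gV H)%type :=
  fun u v => match u, v with
  | inl a, inl b => gadj a b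
  | inr a, inr b => gadj a b
  | _, _ => true
  end.
Lemma join_sym G H : symmetric (join_adj G H).
Proof. by case=> a [] b //=; rewrite gadj_sym. Qed.
Lemma join_irr G H : irreflexive (join_adj G H).
Proof. by case=> a /=; rewrite gadj_irr. Qed.
Definition gjoin (G H : graph) : graph := Graph (@join_sym G H) (@join_irr G H).

Definition prod_adj (G H : graph) : rel (gV G * gV H)%type :=
  fun u v => gadj u.1 v.1 || gadj u.2 v.2.
Lemma prod_sym G H : symmetric (prod_adj G H).
Proof. by case=> a b [c d]; rewrite /prod_adj /= gadj_sym [gadj b _]gadj_sym. Qed.
Lemma prod_irr G H : irreflexive (prod_adj G H).
Proof. by case=> a b; rewrite /prod_adj /= !gadj_irr. Qed.
Definition gprod (G H : graph) : graph := Graph (@prod_sym G H) (@prod_irr G H).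

(** The Zykov ring: Grothendieck group of (graphs/iso, join), elements are
    formal differences (A, B) = A - B, with the standard Grothendieck
    equivalence (A,B) ~ (C,D) iff A + D + E ~= C + B + E for some E. *)
Definition zyk := (graph * graph)%type.

Definition zeq (x y : zyk) : Prop :=
  exists E : graph, giso (gjoin (gjoin x.1 y.2) E) (gjoin (gjoin y.1 x.2) E).

Definition zadd (x y : zyk) : zyk := (gjoin x.1 y.1, gjoin x.2 y.2).
(** Bilinear extension of the Zykov product:
    (A - B)(C - D) = (AC + BD) - (AD + BC). *)
Definition zmul (x y : zyk) : zyk :=
  (gjoin (gprod x.1 y.1) (gprod x.2 y.2), gjoin (gprod x.1 y.2) (gprod x.2 y.1)).
Definition zzero : zyk := (gempty, gempty).
Definition zone : zyk := (K1, gempty).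
Definition K2 : graph := gjoin K1 K1.
Definition ztwo : zyk := (K2, gempty).

(** The Zykov field: field of fractions of the Zykov ring, elements are
    pairs (p, q) with q <> 0, with (p,q) = (r,s) iff p s = r q. *)
Record zfrac := ZFrac { znum : zyk; zden : zyk; zden_neq0 : ~ zeq zden zzero }.

Definition feq (x y : zfrac) : Prop :=
  zeq (zmul (znum x) (zden y)) (zmul (znum y) (zden x)).

(** product of fractions; the denominator stays nonzero because the Zykov
    ring is an integral domain, so we only define the product's components. *)
Definition fmul_num (x y : zfrac) : zyk := zmul (znum x) (znum y).
Definition fmul_den (x y : zfrac) : zyk := zmul (zden x) (zden y).

Lemma zone_neq0 : ~ zeq zone zzero.
Proof.
move=> [E [f [fbij _]]].
have := bij_eq_card fbij.
rewrite !card_sum /= !card_void card_unit.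
by move=> /eqP; rewrite -addnA eqn_add2r.
Qed.

Definition ftwo : zfrac := ZFrac ztwo zone zone_neq0.

(** x * x = y in the Zykov field (the product x*x has numerator
    num x * num x and denominator den x * den x). *)
Definition fsq_eq (x y : zfrac) : Prop :=
  zeq (zmul (fmul_num x x) (zden y)) (zmul (znum y) (fmul_den x x)).

(* Main.v *)
Require Import Defs.
From mathcomp Require Import all_boot.
From mathcomp Require Import zify.
Set Implicit Arguments. Unset Strict Implicit. Unset Printing Implicit Defensive.

Section Hom.
Variables (T : finType) (r e : rel T).

Definition valid (G : graph) (f : {ffun T -> gV G}) : bool :=
  [forall x, forall y, (r x y ==> ~~ gadj (f x) (f y)) && (e x y ==> (f x == f y))].

Arguments valid : clear implicits.
Definition hc (G : graph) : nat := #|[set f | valid G f]|.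

Lemma validP G (f : {ffun T -> gV G}) : reflect (forall x y, (r x y -> ~~ gadj (f x) (f y)) /\ (e x y -> f x = f y)) (valid G f).
Proof.
apply: (iffP forallP) => [H x y | H x]; last first.
  by apply/forallP => y; case: (H x y) => H1 H2; apply/andP; split; apply/implyP => // /H2 ->.
move: (forallP (H x) y) => /andP[/implyP H1 /implyP H2]; split => // /H2; exact/eqP.
Qed.

Lemma hc_le (G H : graph) (phi : gV G -> gV H) : injective phi ->
  (forall x y, ~~ gadj x y -> ~~ gadj (phi x) (phi y)) -> hc G <= hc H.
Proof.
move=> inj Hphi; rewrite /hc.
have <- : #|[set [ffun x => phi (f x)] | f : {ffun T -> gV G} in [set f | valid G f]]| = #|[set f | valid G f]|.
  apply: card_imset => f g /ffunP E; apply/ffunP => x; apply: inj; move: (E x); by rewrite !ffunE.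
apply: subset_leq_card; apply/subsetP => g /imsetP[f]; rewrite inE => /validP Hf ->.
rewrite inE; apply/validP => x y; rewrite !ffunE; case: (Hf x y) => H1 H2; split.
  by move/H1/Hphi.
by move/H2 ->.
Qed.

Lemma hc_iso G H : giso G H -> hc G = hc H.
Proof.
move=> [f [[g fK gK] Hf]]; apply/eqP; rewrite eqn_leq; apply/andP; split.
  apply: (@hc_le _ _ f); first exact: can_inj fK.
  by move=> x y; rewrite Hf.
apply: (@hc_le _ _ g); first exact: can_inj gK.
by move=> x y; rewrite -Hf !gK.
Qed.

Lemma hc_prod G H : hc (gprod G H) = hc G * hc H.
Proof.
rewrite /hc -cardsX.
pose F (p : {ffun T -> gV G} * {ffun T -> gV H}) : {ffun T -> gV (gprod G H)} :=
  [ffun x => (p.1 x, p.2 x)].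
have Finj : injective F.
  move=> [f1 f2] [g1 g2] /ffunP E.
  have E1 : f1 = g1 by apply/ffunP => x; move: (E x); rewrite !ffunE => -[].
  have E2 : f2 = g2 by apply/ffunP => x; move: (E x); rewrite !ffunE => -[].
  by rewrite E1 E2.
rewrite -(card_imset _ Finj); apply: eq_card => f; rewrite inE.
apply/idP/imsetP => [/validP Hf | [[g h]]].
  exists ([ffun x => (f x).1], [ffun x => (f x).2]).
    rewrite inE /=; apply/andP; split; rewrite inE; apply/validP => x y; rewrite !ffunE;
    case: (Hf x y) => H1 H2; split.
    - by move/H1; rewrite /= /prod_adj negb_or => /andP[].
    - by move/H2 ->.
    - by move/H1; rewrite /= /prod_adj negb_or => /andP[].
    - by move/H2 ->.
  by apply/ffunP => x; rewrite !ffunE; case: (f x).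
rewrite inE /= !inE => /andP[/validP Hg /validP Hh] ->.
apply/validP => x y; rewrite !ffunE /= /prod_adj /=; case: (Hg x y) (Hh x y) => [G1 G2] [H1 H2]; split.
  by move=> rxy; rewrite negb_or G1 // H1.
by move=> exy; rewrite G2 // H2.
Qed.

Lemma hc_K1 : hc K1 = 1.
Proof.
rewrite /hc; have -> : [set f | valid K1 f] = setT.
  by apply/setP => f; rewrite !inE; apply/validP => x y; split => // _; case: (f x); case: (f y).
by rewrite cardsT card_ffun card_unit exp1n.
Qed.

Lemma hc_empty : 0 < #|T| -> hc gempty = 0.
Proof.
move=> T0; rewrite /hc; apply/eqP; rewrite cards_eq0; apply/eqP/setP => f; rewrite inE in_set0.
by case/card_gt0P: T0 => x _; case: (f x).
Qed.

Definition cr : rel T := fun x y => [|| r x y, r y x, e x y | e y x].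
Definition conn := forall x y, connect cr x y.

Lemma hc_join G H : 0 < #|T| -> conn -> hc (gjoin G H) = hc G + hc H.
Proof.
move=> /card_gt0P[x0 _] Hc; rewrite /hc.
pose L (f : {ffun T -> gV G}) : {ffun T -> gV (gjoin G H)} := [ffun x => inl (f x)].
pose R (f : {ffun T -> gV H}) : {ffun T -> gV (gjoin G H)} := [ffun x => inr (f x)].
have Linj : injective L.
  by move=> f g /ffunP E; apply/ffunP => x; move: (E x); rewrite !ffunE => -[].
have Rinj : injective R.
  by move=> f g /ffunP E; apply/ffunP => x; move: (E x); rewrite !ffunE => -[].
rewrite -(card_imset _ Linj) -(card_imset _ Rinj).
have -> : [set f | valid (gjoin G H) f] = L @: [set f | valid G f] :|: R @: [set f | valid H f].
  apply/setP => f; rewrite !inE; apply/idP/idP => [/validP Hf | ].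
    pose side x := if f x is inl _ then true else false.
    have Hs : forall x, side x = side x0.
      move=> x; have := Hc x0 x.
      have cl : closed cr [pred y | side y].
        move=> a b; have [A1 A2] := Hf a b; have [B1 B2] := Hf b a; rewrite /cr !inE /side.
        move: A1 A2 B1 B2; case: (f a) => u; case: (f b) => v //= A1 A2 B1 B2;
          case/or4P => [/A1|/B1|/A2|/B2] //.
      by move/(closed_connect cl) => /=.
    case E0: (f x0) => [a0|b0].
      apply/orP; left; apply/imsetP.
      exists [ffun x => if f x is inl a then a else a0].
        rewrite inE; apply/validP => x y; rewrite !ffunE.
        have := Hs x; have := Hs y; rewrite /side E0.
        case: (Hf x y); case: (f x) => // a; case: (f y) => // b /= H1 H2 _ _; split.
          by [].
        by move/H2 => [->].
      apply/ffunP => x; rewrite !ffunE; have := Hs x; rewrite /side E0; by case: (f x).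
    apply/orP; right; apply/imsetP.
    exists [ffun x => if f x is inr a then a else b0].
      rewrite inE; apply/validP => x y; rewrite !ffunE.
      have := Hs x; have := Hs y; rewrite /side E0.
      case: (Hf x y); case: (f x) => // a; case: (f y) => // b /= H1 H2 _ _; split.
        by [].
      by move/H2 => [->].
    apply/ffunP => x; rewrite !ffunE; have := Hs x; rewrite /side E0; by case: (f x).
  case/orP => /imsetP[g]; rewrite inE => /validP Hg ->; apply/validP => x y; rewrite !ffunE /=;
    case: (Hg x y) => H1 H2; split => // /H2 -> //.
rewrite cardsU; have -> : L @: [set f | valid G f] :&: R @: [set f | valid H f] = set0.
  apply/setP => f; rewrite !inE; apply/negP => /andP[/imsetP[g _ ->] /imsetP[h _ /ffunP E]].
  by move: (E x0); rewrite !ffunE.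
by rewrite cards0 subn0.
Qed.

End Hom.
Arguments valid [T] r e G f.

Section Split.
Variables (T : finType) (r e : rel T) (x0 y0 : T).
Let S := [set y | connect (cr r e) x0 y].
Hypothesis y0S : y0 \notin S.
Definition ea : rel T := fun x y => e x y || ((x \notin S) && (y == x0)).
Definition eb : rel T := fun x y => e x y || ((x \in S) && (y == y0)).

Lemma cr_sym : symmetric (cr r e).
Proof. by move=> x y; rewrite /cr; case: (r x y); case: (r y x); case: (e x y); case: (e y x). Qed.

Lemma S_closed x y : cr r e x y -> (x \in S) = (y \in S).
Proof.
move=> xy; rewrite !inE; apply/idP/idP => H.
  exact: connect_trans H (connect1 xy).
by apply: connect_trans H (connect1 _); rewrite cr_sym.
Qed.

Lemma x0S : x0 \in S. Proof. by rewrite inE connect0. Qed.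

Lemma hc_split G : hc r e G = hc r ea G * hc r eb G.
Proof.
rewrite /hc -cardsX.
pose Psi (p : {ffun T -> gV G} * {ffun T -> gV G}) : {ffun T -> gV G} :=
  [ffun x => if x \in S then p.1 x else p.2 x].
have Hinj : {in setX [set f | valid r ea G f] [set f | valid r eb G f] &, injective Psi}.
  move=> [g h] [g' h']; rewrite !inE /= => /andP[/validP Hg /validP Hh] /andP[/validP Hg' /validP Hh'] /ffunP E.
  have E1 : g = g'.
    apply/ffunP => x; case xS: (x \in S).
      by move: (E x); rewrite !ffunE xS.
    have ex : ea x x0 by rewrite /ea xS eqxx orbT.
    rewrite (proj2 (Hg x x0) ex) (proj2 (Hg' x x0) ex).
    by move: (E x0); rewrite !ffunE x0S.
  have E2 : h = h'.
    apply/ffunP => x; case xS: (x \in S); last first.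
      by move: (E x); rewrite !ffunE xS.
    have ex : eb x y0 by rewrite /eb xS eqxx orbT.
    rewrite (proj2 (Hh x y0) ex) (proj2 (Hh' x y0) ex).
    by move: (E y0); rewrite !ffunE (negbTE y0S).
  by rewrite E1 E2.
rewrite -(card_in_imset Hinj); apply: eq_card => f; rewrite inE.
apply/idP/imsetP => [/validP Hf | [[g h]]].
  exists ([ffun x => if x \in S then f x else f x0], [ffun x => if x \in S then f y0 else f x]).
    rewrite !inE /=; apply/andP; split; apply/validP => x y; rewrite !ffunE.
      case: (Hf x y) => H1 H2; split.
        move=> rxy; have := S_closed (x:=x) (y:=y); rewrite /cr rxy => /(_ isT) <-.
        by case: (x \in S); rewrite ?H1 // gadj_irr.
      rewrite /ea; case/orP => [exy | /andP[xS /eqP ->]].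
        have := S_closed (x:=x) (y:=y); rewrite /cr exy !orbT => /(_ isT) <-.
        by case: (x \in S); rewrite ?H2.
      by rewrite (negbTE xS) x0S.
    case: (Hf x y) => H1 H2; split.
      move=> rxy; have := S_closed (x:=x) (y:=y); rewrite /cr rxy => /(_ isT) <-.
      by case: (x \in S); rewrite ?H1 // gadj_irr.
    rewrite /eb; case/orP => [exy | /andP[xS /eqP ->]].
      have := S_closed (x:=x) (y:=y); rewrite /cr exy !orbT => /(_ isT) <-.
      by case: (x \in S); rewrite ?H2.
    by rewrite xS (negbTE y0S).
  by apply/ffunP => x; rewrite !ffunE /=; case: (x \in S).
rewrite !inE /= => /andP[/validP Hg /validP Hh] ->.
apply/validP => x y; rewrite !ffunE /=.
case: (Hg x y) (Hh x y) => [G1 G2] [H1 H2]; split.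
  move=> rxy; have := S_closed (x:=x) (y:=y); rewrite /cr rxy => /(_ isT) <-.
  by case: (x \in S); [apply: G1 | apply: H1].
move=> exy; have := S_closed (x:=x) (y:=y); rewrite /cr exy !orbT => /(_ isT) <-.
by case: (x \in S); [apply: G2 | apply: H2]; rewrite /ea /eb exy.
Qed.

Lemma conn_ea : conn r ea.
Proof.
have H : forall x, connect (cr r ea) x0 x.
  move=> x; case xS: (x \in S).
    move: xS; rewrite inE; apply: connect_sub => a b ab; apply: connect1.
    by move: ab; rewrite /cr /ea; case/or4P => ->; rewrite ?orbT.
  by apply: connect1; rewrite /cr /ea xS eqxx /= !orbT.
have sym : connect_sym (cr r ea).
  apply: sym_connect_sym => a b; rewrite /cr.
  by case: (r a b); case: (r b a); case: (ea a b); case: (ea b a).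
by move=> x y; apply: connect_trans (H y); rewrite sym.
Qed.

Lemma sub_eb x y : connect (cr r e) x y -> connect (cr r eb) x y.
Proof.
apply: connect_sub => a b ab; apply: connect1.
by move: ab; rewrite /cr /eb; case/or4P => ->; rewrite ?orbT.
Qed.

Lemma conn_eb_x0y0 : connect (cr r eb) x0 y0.
Proof. by apply: connect1; rewrite /cr /eb x0S eqxx /= !orbT. Qed.

End Split.

Section AllPatterns.
Variables C D : graph.
Hypothesis Hyp : forall (T : finType) (r e : rel T), 0 < #|T| -> conn r e -> hc r e C = hc r e D.

Lemma hc_all (T : finType) (r e : rel T) : hc r e C = hc r e D.
Proof.
move: {2}#|[set p : T * T | ~~ connect (cr r e) p.1 p.2]| (leqnn #|[set p : T * T | ~~ connect (cr r e) p.1 p.2]|) => n.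
elim: n e => [|n IH] e Hn.
  case: (posnP #|T|) => [T0 | T0].
  - rewrite /hc; have Hv : forall G, [set f | valid r e G f] = setT.
      move=> G; apply/setP => f; rewrite !inE; apply/forallP => x.
      by move: T0 => /card0_eq /(_ x); rewrite inE.
    by rewrite !Hv !cardsT !card_ffun T0 !expn0.
  - apply: Hyp => // x y; move: Hn; rewrite leqn0 cards_eq0 => /eqP /setP /(_ (x, y)).
    by rewrite !inE /= => /negbFE.
case: (posnP #|T|) => [T0 | /card_gt0P[x0 _]].
  rewrite /hc; have Hv : forall G, [set f | valid r e G f] = setT.
    move=> G; apply/setP => f; rewrite !inE; apply/forallP => x.
    by move: T0 => /card0_eq /(_ x); rewrite inE.
  by rewrite !Hv !cardsT !card_ffun T0 !expn0.
case: (boolP [forall y, connect (cr r e) x0 y]) => [/forallP Hall | ].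
  apply: Hyp; first by apply/card_gt0P; exists x0.
  have sym : connect_sym (cr r e) by apply: sym_connect_sym; apply: cr_sym.
  by move=> x y; apply: connect_trans (Hall y); rewrite sym.
rewrite negb_forall => /existsP[y0 Hy0].
have y0S : y0 \notin [set y | connect (cr r e) x0 y] by rewrite inE.
rewrite !(hc_split y0S).
rewrite (Hyp _ (conn_ea r e x0)); last by apply/card_gt0P; exists x0.
congr (_ * _); apply: IH.
rewrite -ltnS; apply: leq_trans Hn; apply: proper_card; apply/properP; split.
  apply/subsetP => -[a b]; rewrite !inE /=; apply: contra; exact: sub_eb.
exists (x0, y0); rewrite !inE /= ?Hy0 //.
by rewrite (conn_eb_x0y0 r e x0 y0).
Qed.

End AllPatterns.

Section Ker.
Variables (T : finType) (r : rel T).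
Definition kerf G (f : {ffun T -> gV G}) : {set T * T} := [set p | f p.1 == f p.2].
Definition eK (K : {set T * T}) : rel T := fun x y => (x, y) \in K.
Definition e0 : rel T := fun _ _ => false.
Definition ex (K : {set T * T}) G := #|[set f : {ffun T -> gV G} | valid r e0 G f && (kerf f == K)]|.

Lemma validK K G (f : {ffun T -> gV G}) : valid r (eK K) G f = valid r e0 G f && (K \subset kerf f).
Proof.
apply/validP/andP => [H | [/validP H0 /subsetP HK]].
  split; first by apply/validP => x y; split => //; apply: (proj1 (H x y)).
  by apply/subsetP => -[x y] xy; rewrite inE /=; apply/eqP; apply: (proj2 (H x y)).
move=> x y; split; first exact: (proj1 (H0 x y)).
by move=> /HK; rewrite inE => /eqP.
Qed.

Lemma hc_sum K G : hc r (eK K) G = \sum_(K' : {set T * T} | K \subset K') ex K' G.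
Proof.
rewrite /hc -sum1_card.
rewrite (partition_big (fun f : {ffun T -> gV G} => kerf f) (fun K' : {set T * T} => K \subset K')); last first.
  by move=> f; rewrite inE validK => /andP[].
apply: eq_bigr => K' KK'; rewrite /ex -sum1_card; apply: eq_bigl => f.
rewrite !inE validK; case: eqP => [-> | _]; by rewrite ?KK' ?andbT ?andbF.
Qed.
End Ker.

Section Iso.
Variables C D : graph.
Hypothesis Hall : forall (T : finType) (r e : rel T), hc r e C = hc r e D.

Lemma ex_eq (T : finType) (r : rel T) K : ex r K C = ex r K D.
Proof.
move: {2}#|~: K| (leqnn #|~: K|) => n; elim: n K => [|n IH] K Hn.
  have -> : K = setT.
    move: Hn; rewrite leqn0 cards_eq0 => /eqP/setP H; apply/setP => p.
    by move: (H p); rewrite !inE => /negbFE.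
  have := hc_sum r setT C; rewrite Hall hc_sum.
  by rewrite !(big_pred1 setT) // => K'; rewrite subTset.
have := hc_sum r K C; rewrite Hall hc_sum.
rewrite (bigD1 K) //= [in RHS](bigD1 K) //=.
have -> : \sum_(i : {set T * T} | (K \subset i) && (i != K)) ex r i C = \sum_(i : {set T * T} | (K \subset i) && (i != K)) ex r i D.
  apply: eq_bigr => K' /andP[KK' K'K]; apply: IH.
  rewrite -ltnS; apply: leq_trans Hn; apply: proper_card.
  by rewrite properC properEneq eq_sym K'K KK'.
by move/addIn.
Qed.

End Iso.

Lemma inj_exists (G H : graph) :
  (forall (T : finType) (r e : rel T), hc r e G = hc r e H) ->
  exists f : gV G -> gV H, injective f /\ forall x y, ~~ gadj x y -> ~~ gadj (f x) (f y).
Proof.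
move=> Hall.
pose r : rel (gV G) := fun x y => ~~ gadj x y.
pose K : {set gV G * gV G} := [set p | p.1 == p.2].
have : 0 < ex r K H.
  rewrite -(ex_eq Hall); apply/card_gt0P; exists [ffun x => x]; rewrite inE; apply/andP; split.
    by apply/validP => x y; rewrite !ffunE.
  by apply/eqP/setP => p; rewrite !inE !ffunE.
case/card_gt0P => f; rewrite inE => /andP[/validP Hf /eqP Kf].
exists f; split.
  move=> x y fxy; have : (x, y) \in kerf f by rewrite inE /= fxy.
  by rewrite Kf inE => /eqP.
by move=> x y /(proj1 (Hf x y)).
Qed.

Lemma iso_of (G H : graph) :
  (forall (T : finType) (r e : rel T), hc r e G = hc r e H) -> giso G H.
Proof.
move=> Hall.
have [f [finj Hf]] := inj_exists Hall.
have [g [ginj Hg]] := inj_exists (fun T r e => esym (Hall T r e)).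
have cardGH : #|gV G| <= #|gV H| by apply: leq_card finj.
have cardHG : #|gV H| <= #|gV G| by apply: leq_card ginj.
pose NG := [set p : gV G * gV G | ~~ gadj p.1 p.2].
pose NH := [set p : gV H * gV H | ~~ gadj p.1 p.2].
pose F (p : gV G * gV G) := (f p.1, f p.2).
pose Gm (p : gV H * gV H) := (g p.1, g p.2).
have Finj : injective F by move=> [a b] [c d] [/finj -> /finj ->].
have Ginj : injective Gm by move=> [a b] [c d] [/ginj -> /ginj ->].
have FN : F @: NG \subset NH.
  by apply/subsetP => z /imsetP[[a b]]; rewrite !inE /= => /Hf H1 ->.
have GN : Gm @: NH \subset NG.
  by apply/subsetP => z /imsetP[[a b]]; rewrite !inE /= => /Hg H1 ->.
have EF : F @: NG = NH.
  apply/eqP; rewrite eqEcard FN card_imset //.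
  by apply: leq_trans (subset_leq_card GN); rewrite card_imset.
exists f; split.
  apply: inj_card_bij => //.
move=> x y; apply/idP/idP => H0.
  apply/negPn/negP => nxy; have := Hf _ _ nxy; by rewrite H0.
apply/negPn/negP => nxy.
have : (f x, f y) \in NH by rewrite inE.
rewrite -EF => /imsetP[[a b]]; rewrite inE /= => nab [/finj ea /finj eb].
by move: nab; rewrite -ea -eb H0.
Qed.

Lemma sqrt2_nat X Y : X ^ 2 = 2 * Y ^ 2 -> Y = 0.
Proof.
move=> E; case: (posnP Y) => // Y0.
have X0 : 0 < X by case: (posnP X) E => // ->; rewrite exp0n // => /esym/eqP; rewrite muln_eq0 expn_eq0 /=; lia.
have := congr1 (logn 2) E.
rewrite lognX lognM // ?expn_gt0 ?Y0 // lognX (logn_prime _ (isT : prime 2)) /=.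
lia.
Qed.

Lemma key a b c d : a * a + b * b + 2 * (c * d + d * c) = 2 * (c * c + d * d) + (a * b + b * a) -> c = d.
Proof.
wlog hab : a b / a <= b.
  move=> W E; case: (leqP a b) => h; first exact: (W a b).
  apply: (W b a); [lia | lia].
wlog hcd : c d / c <= d.
  move=> W E; case: (leqP c d) => h; first exact: (W c d).
  apply/esym; apply: (W d c); [lia | lia].
move=> E.
have [X eX] : exists X, b = a + X by exists (b - a); lia.
have [Y eY] : exists Y, d = c + Y by exists (d - c); lia.
subst b d.
have : X ^ 2 = 2 * Y ^ 2 by nia.
move/sqrt2_nat => ->; lia.
Qed.

Theorem mainTheorem15 : ~ exists x : zfrac, fsq_eq x ftwo.
Proof.
move=> [[[A B] [C D] nz] [E iso]].
have Hyp : forall (T : finType) (r e : rel T), 0 < #|T| -> conn r e -> hc r e C = hc r e D.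
  move=> T r e T0 Hc.
  have J := fun G H => hc_join G H T0 Hc.
  have := hc_iso r e iso.
  rewrite /= /K2 !J !hc_prod !J !hc_prod !hc_K1 (hc_empty r e T0).
  move=> Eq; apply: (key (a := hc r e A) (b := hc r e B)); lia.
apply nz.
have [f [[g fK gK] Hf]] := iso_of (hc_all Hyp).
exists gempty.
pose F (z : gV (gjoin (gjoin C gempty) gempty)) : gV (gjoin (gjoin gempty D) gempty) :=
  match z with inl (inl c) => inl (inr (f c)) | inl (inr v) => match v with end | inr v => match v with end end.
pose Gi (z : gV (gjoin (gjoin gempty D) gempty)) : gV (gjoin (gjoin C gempty) gempty) :=
  match z with inl (inr d) => inl (inl (g d)) | inl (inl v) => match v with end | inr v => match v with end end.
exists F; split.
  exists Gi.
    by case=> [[c|[]]|[]] //=; rewrite fK.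
  by case=> [[[]|d]|[]] //=; rewrite gK.
by case=> [[c|[]]|[]] [[c'|[]]|[]] /=.
Qed.
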